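(* Let $n\ge1$, let $\mathbf{v}=(v_1,\dots,v_n)\in\mathbb{R}^n$ with $v_e>0$ for all $e$, let $V_c>0$, and let $\mathbf{w}\in\mathbb{R}^n_+$ (i.e. $\mathbf{w}\ge 0$). Consider the knapsack problem $$(\mathcal{P}_{kp}):\ \min\{P_u(\boldsymbol{\rho})=-\mathbf{w}^T\boldsymbol{\rho}\ :\ \mathbf{v}^T\boldsymbol{\rho}\le V_c,\ \boldsymbol{\rho}\in\{0,1\}^n\},$$ the set $\mathcal{S}_a^+=\{(\boldsymbol{\sigma},\tau)\in\mathbb{R}^n\times\mathbb{R}:\boldsymbol{\sigma}>0,\ \tau\ge 0\}$, and the canonical dual problem $$(\mathcal{P}_u^d):\ \max\Big\{P_u^d(\boldsymbol{\sigma},\tau)=-\sum_{e=1}^n\frac{(\sigma_e+w_e-\tau v_e)^2}{4\sigma_e}-\tau V_c\ :\ (\boldsymbol{\sigma},\tau)\in\mathcal{S}_a^+\Big\}.$$ If $\bar{\boldsymbol{\zeta}}=(\bar{\boldsymbol{\sigma}},\bar\tau)\in\mathcal{S}_a^+$ is a solution to $(\mathcal{P}_u^d)$, then $$\bar{\boldsymbol{\rho}}=\tfrac12[\mathrm{Diag}(\bar{\boldsymbol{\sigma}})]^{-1}(\bar{\boldsymbol{\sigma}}-\bar\tau\mathbf{v}+\mathbf{w})$$ is a unique global optimal solution to $(\mathcal{P}_{kp})$, and $$P_u(\bar{\boldsymbol{\rho}})=\min_{\boldsymbol{\rho}\in\mathcal{Z}_a}P_u(\boldsymbol{\rho})=\max_{\boldsymbol{\zeta}\in\mathcal{S}_a^+}P_u^d(\boldsymbol{\zeta})=P_u^d(\bar{\boldsymbol{\zeta}}),$$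 where $\mathcal{Z}_a=\{\boldsymbol{\rho}\in\{0,1\}^n:\mathbf{v}^T\boldsymbol{\rho}\le V_c\}$.
   Context: Vector inequalities are componentwise; $\boldsymbol{\sigma}>0$ means every component is strictly positive. In the paper $\mathbf{w}=\mathbf{c}(\mathbf{u})$ is the vector of element strain energies for a given displacement $\mathbf{u}$, and $\mathbf{v}$ is the vector of element volumes. *)

(* Defs.v *)
(* R is an arbitrary real field (the statement is purely
   algebraic/order-theoretic, so this covers the reals). Vectors in R^n are
   functions 'I_n -> R. *)
From HB Require Import structures.
From mathcomp Require Import all_boot all_order all_algebra.
Set Implicit Arguments. Unset Strict Implicit. Unset Printing Implicit Defensive.
Import Order.TTheory GRing.Theory Num.Theory.
Local Open Scope ring_scope.

Section KP.
Variables (R : realFieldType) (n : nat).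

Definition dotv (x y : 'I_n -> R) : R := \sum_(e < n) x e * y e.

Definition Pu (w rho : 'I_n -> R) : R := - dotv w rho.

Definition Za (v : 'I_n -> R) (Vc : R) (rho : 'I_n -> R) : Prop :=
  (forall e, rho e = 0 \/ rho e = 1) /\ dotv v rho <= Vc.

Definition Sa_plus (sigma : 'I_n -> R) (tau : R) : Prop :=
  (forall e, 0 < sigma e) /\ 0 <= tau.

Definition Pud (v w : 'I_n -> R) (Vc : R) (sigma : 'I_n -> R) (tau : R) : R :=
  - (\sum_(e < n) (sigma e + w e - tau * v e) ^+ 2 / (4 * sigma e)) - tau * Vc.

Definition rho_bar (v w sigma : 'I_n -> R) (tau : R) : 'I_n -> R :=
  fun e => (sigma e - tau * v e + w e) / (2 * sigma e).

End KP.

(* Main.v *)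
Require Import Defs.
From mathcomp Require Import all_boot all_order all_algebra.
From mathcomp Require Import lra ring.
Import Order.TTheory GRing.Theory Num.Theory.
From Stdlib Require Import FunctionalExtensionality.
Local Open Scope ring_scope.

Lemma step1 (R : realFieldType) (s0 w0 v0 t : R) : 0 < s0 ->
  (forall s, 0 < s -> (s0 + w0 - t * v0) ^+ 2 / (4 * s0) <= (s + w0 - t * v0) ^+ 2 / (4 * s)) ->
  (0 < w0 - t * v0 /\ s0 = w0 - t * v0) \/ (w0 - t * v0 < 0 /\ s0 = - (w0 - t * v0)).
Proof.
move=> s0p H.
have E : forall s, 0 < s -> (s + w0 - t * v0) ^+ 2 / (4 * s) =
   (w0 - t * v0) + (s - (w0 - t*v0)) ^+ 2 / (4 * s).
  move=> s sp; field; lra.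
have E' : forall s, 0 < s -> (s + w0 - t * v0) ^+ 2 / (4 * s) =
   (s + (w0 - t*v0)) ^+ 2 / (4 * s) by move=> s sp; rewrite addrA.
set a := w0 - t * v0 in E E' *.
have q0 : forall s, 0 < s -> 0 <= (s - a) ^+ 2 / (4 * s).
  move=> s sp; apply: divr_ge0; [exact: sqr_ge0| lra].
have q1 : forall s, 0 < s -> 0 <= (s + a) ^+ 2 / (4 * s).
  move=> s sp; apply: divr_ge0; [exact: sqr_ge0| lra].
case: (ltrgtP a 0) => ha.
- right; split => //.
  have := H (- a); rewrite !E' ?oppr_gt0 // addNr expr0n /= mul0r => /(_ ha) h.
  have h2 := q1 _ s0p.
  have h3 : (s0 + a) ^+ 2 / (4 * s0) = 0 by apply/eqP; rewrite eq_le h h2.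
  move: h3 => /eqP; rewrite mulf_eq0 invr_eq0 sqrf_eq0 => /orP[/eqP|/eqP]; lra.
- left; split => //.
  have := H a ha; rewrite !E // subrr expr0n /= mul0r addr0 => h.
  have h2 := q0 _ s0p.
  have h3 : (s0 - a) ^+ 2 / (4 * s0) = 0 by apply/eqP; rewrite eq_le h2; lra.
  move: h3 => /eqP; rewrite mulf_eq0 invr_eq0 sqrf_eq0 => /orP[/eqP|/eqP]; lra.
- exfalso.
  have := H (s0 / 2); rewrite !E' ?divr_gt0 // ha !addr0 => /(_ isT).
  have -> : s0 ^+ 2 / (4 * s0) = s0 / 4 by field; lra.
  have -> : (s0/2) ^+ 2 / (4 * (s0/2)) = s0 / 8 by field; lra.
  lra.
Qed.
Theorem theorem2 (R : realFieldType) (n : nat) (hn : (0 < n)%N)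
  (v w : 'I_n -> R) (Vc : R)
  (hv : forall e, 0 < v e) (hVc : 0 < Vc) (hw : forall e, 0 <= w e)
  (sigmab : 'I_n -> R) (taub : R)
  (hS : Sa_plus sigmab taub)
  (hmax : forall (sigma : 'I_n -> R) (tau : R),
      Sa_plus sigma tau -> Pud v w Vc sigma tau <= Pud v w Vc sigmab taub) :
  let rhob := rho_bar v w sigmab taub in
  [/\ Za v Vc rhob,
      (forall rho, Za v Vc rho -> Pu w rhob <= Pu w rho),
      (forall rho, Za v Vc rho -> Pu w rho = Pu w rhob -> rho = rhob)
    & Pu w rhob = Pud v w Vc sigmab taub].
Proof.
move=> rhob; case: hS => hsig htau.
pose A e := w e - taub * v e.
pose F e := (sigmab e + w e - taub * v e) ^+ 2 / (4 * sigmab e).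
have cases e : (0 < A e /\ sigmab e = A e) \/ (A e < 0 /\ sigmab e = - A e).
  apply: step1 => // s sp.
  pose sg := fun j => if j == e then s else sigmab j.
  have hs' : Sa_plus sg taub.
    split=> // j; rewrite /sg; case: eqP => //.
  have := hmax _ _ hs'; rewrite /Pud.
  rewrite (bigD1 e) //= (bigD1 e (P := xpredT)) //= /sg eqxx.
  rewrite (eq_bigr (fun j => (sigmab j + w j - taub * v j) ^+ 2 / (4 * sigmab j))).
    lra.
  by move=> j /negbTE ->.
have rho01 e : (0 < A e /\ rhob e = 1) \/ (A e < 0 /\ rhob e = 0).
  rewrite /rhob /rho_bar; case: (cases e) => [[h1 h2]|[h1 h2]]; [left|right];
    split => //; rewrite h2 /A.
    by field; rewrite /A in h1; lra.
  rewrite /A in h1 *; apply/eqP; rewrite mulf_eq0; apply/orP; left; apply/eqP; lra.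
have FA e : F e = A e * rhob e.
  rewrite /F; case: (cases e) => [[h1 h2]|[h1 h2]];
  case: (rho01 e) => [[h3 ->]|[h3 ->]]; try lra; rewrite h2 /A; rewrite /A in h1.
    by field; lra.
  rewrite mulr0; apply/eqP; rewrite mulf_eq0 sqrf_eq0; apply/orP; left; apply/eqP; lra.
pose D := dotv v rhob - Vc.
pose Q := \sum_(e < n) v e ^+ 2 / (4 * sigmab e).
have Qge0 : 0 <= Q.
  apply: sumr_ge0 => e _; apply: divr_ge0; first exact: sqr_ge0.
  by have := hsig e; lra.
have expand t : Pud v w Vc sigmab (taub + t) = Pud v w Vc sigmab taub + t * D - t ^+ 2 * Q.
  rewrite /Pud /D /Q /dotv.
  rewrite (eq_bigr (fun e => F e + (- (t * (v e * rhob e)) + t ^+ 2 * (v e ^+ 2 / (4 * sigmab e))))).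
    rewrite big_split big_split /= sumrN -!mulr_sumr /F; lra.
  move=> e _; rewrite /F /rhob /rho_bar; have := hsig e => he; field; lra.
have claim t : 0 <= taub + t -> t * D - t ^+ 2 * Q <= 0.
  move=> ht; have := hmax sigmab (taub + t) (conj hsig ht); rewrite expand; lra.
have Dle0 : D <= 0.
  rewrite leNgt; apply/negP => Dp.
  have := claim (D / (Q + 1)); rewrite expr2.
  have tp0 : 0 <= D / (Q + 1) by apply: divr_ge0; lra.
  move=> /(_ ltac:(lra)).
  have q1 : 0 < Q + 1 by lra.
  have tp : 0 < D / (Q + 1) by apply: divr_gt0.
  have -> : D / (Q + 1) * D - D / (Q + 1) * (D / (Q + 1)) * Q = D / (Q + 1) * (D / (Q+1)) 
    by field; lra.
  have := mulr_gt0 tp tp; lra.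
have slack : taub * D = 0.
  case: (ltrgtP taub 0) => ht; [lra| |by rewrite ht mul0r].
  have DNle0 : - D <= 0.
    rewrite leNgt; apply/negP => Dp.
    pose s := taub * (- D) / (taub * Q - D).
    have den : 0 < taub * Q - D by have := mulr_ge0 htau Qge0; lra.
    have sp : 0 < s by apply: divr_gt0 => //; apply: mulr_gt0.
    have sle : s <= taub.
      by rewrite /s ler_pdivrMr //; have := mulr_ge0 htau Qge0; nra.
    have := claim (- s) ltac:(lra); rewrite sqrrN expr2.
    have -> : - s * D - s * s * Q = s * ((-D) * (-D) / (taub * Q - D)).
      by rewrite /s; field; lra.
    have : 0 < (- D) * (- D) / (taub * Q - D).
      by apply: divr_gt0 => //; apply: mulr_gt0.
    move=> h; have := mulr_gt0 sp h; lra.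
  have -> : D = 0 by lra.
  by rewrite mulr0.
have sumA rho : \sum_(e < n) A e * rho e = dotv w rho - taub * dotv v rho.
  rewrite /dotv mulr_sumr -sumrB; apply: eq_bigr => e _; rewrite /A; ring.
have PudE : Pud v w Vc sigmab taub = - (\sum_(e < n) A e * rhob e) - taub * Vc.
  by rewrite /Pud; congr (- _ - _); apply: eq_bigr => e _; rewrite -FA.
have PuE : Pu w rhob = Pud v w Vc sigmab taub.
  rewrite PudE sumA /Pu; move: slack; rewrite /D; lra.
have key rho : Za v Vc rho -> Pu w rhob <= Pu w rho /\
   (Pu w rho = Pu w rhob -> \sum_(e < n) (A e * rhob e - A e * rho e) = 0).
  case=> h01 hle.
  have pw e : A e * rho e <= A e * rhob e.
    by case: (rho01 e) => [[h1 ->]|[h1 ->]]; case: (h01 e) => ->; nra.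
  have sle : \sum_(e < n) A e * rho e <= \sum_(e < n) A e * rhob e by apply: ler_sum.
  have tt : taub * (dotv v rho - Vc) <= 0 by nra.
  have ineq : Pu w rhob <= Pu w rho.
    rewrite PuE PudE; move: (sumA rho); rewrite /Pu; lra.
  split => // heq.
  rewrite sumrB; move: heq (sumA rho); rewrite PuE PudE /Pu; lra.
split.
- split; last by rewrite -/(D + Vc); move: Dle0; rewrite /D; lra.
  by move=> e; case: (rho01 e) => [[_ ->]|[_ ->]]; auto.
- by move=> rho /key [].
- move=> rho hZ heq; have [_ /(_ heq) hs] := key rho hZ.
  case: hZ => h01 _.
  apply: functional_extensionality => e.
  have := psumr_eq0P _ hs (i := e) isT.
  have pw : forall e, true -> 0 <= A e * rhob e - A e * rho e.
    move=> e' _; rewrite subr_ge0.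
    by case: (rho01 e') => [[h1 ->]|[h1 ->]]; case: (h01 e') => ->; nra.
  move=> /(_ pw) /eqP; rewrite -mulrBr mulf_eq0 => /orP[/eqP|/eqP]; 
    case: (rho01 e) => [[h1 h2]|[h1 h2]]; lra.
- exact: PuE.
Qed.
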